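(* Let $r\ge 3$ and let $\mathcal H=(V,E)$ be an $r$-uniform bi-hypergraph. Then $\mathcal H$ is colorable if either of the following holds: (i) $|E|<(r-1)^{r-1}$; (ii) every edge of $\mathcal H$ shares at least one vertex with fewer than $(r-1)^{r-1}\mathrm{e}^{-1}-1$ other edges of $\mathcal H$, where $\mathrm{e}$ is the base of the natural logarithm.
   Context: A bi-hypergraph $\mathcal H=(V,E)$ consists of a finite vertex set $V$ and a set $E$ of subsets of $V$, called edges, with no edge contained in another. It is $r$-uniform if every edge has exactly $r$ elements. A mapping $f:V\to\mathbb N$ is a proper coloring of $\mathcal H$ if $1<|f(e)|<|e|$ for every $e\in E$, where $f(e)=\{f(v):v\in e\}$. $\mathcal H$ is colorable if it has a proper coloring, and uncolorable otherwise. *)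

(* Defs.v *)
From Stdlib Require Import Reals.
From mathcomp Require Import all_boot.
Set Implicit Arguments. Unset Strict Implicit. Unset Printing Implicit Defensive.

Definition bi_hypergraph (V : finType) (E : {set {set V}}) : Prop :=
  forall e1 e2, e1 \in E -> e2 \in E -> e1 \subset e2 -> e1 = e2.

Definition uniform (V : finType) (r : nat) (E : {set {set V}}) : Prop :=
  forall e, e \in E -> #|e| = r.

(* f(e) = {f v : v in e}, as a duplicate-free list of colors (nat is infinite,
   so we use a seq rather than a finset); its size is |f(e)|. *)
Definition color_set (V : finType) (f : V -> nat) (e : {set V}) : seq nat :=
  undup [seq f v | v in e].

Definition proper_coloring (V : finType) (E : {set {set V}}) (f : V -> nat) : Prop :=
  forall e, e \in E -> 1 < size (color_set f e) < #|e|.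

Definition colorable (V : finType) (E : {set {set V}}) : Prop :=
  exists f : V -> nat, proper_coloring E f.

Definition nb_intersecting (V : finType) (E : {set {set V}}) (e : {set V}) : nat :=
  #|[set e' in E | (e' != e) && ~~ [disjoint e' & e]]|.

(* Main.v *)
Require Import Defs.
From Stdlib Require Import Reals Lra.
From mathcomp Require Import all_boot zify.
Set Implicit Arguments. Unset Strict Implicit. Unset Printing Implicit Defensive.


Lemma INR_expn (m n : nat) : INR (expn m n) = pow (INR m) n.
Proof.
elim: n => [|n IH]; first by rewrite expn0.
by rewrite expnS mult_INR IH.
Qed.

Lemma exp_pow_n (x : R) (n : nat) : pow (exp x) n = exp (Rmult (INR n) x).
Proof.
elim: n => [|n IH]; first by rewrite /= Rmult_0_l exp_0.
rewrite -[pow (exp x) n.+1]/(Rmult (exp x) (pow (exp x) n)) IH -exp_plus S_INR; f_equal; ring.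
Qed.

Lemma key_real (D Q : nat) : (1 <= D)%N ->
  Rlt (INR D) (Rminus (Rmult (INR Q) (Rinv (exp 1))) 1) ->
  (expn (D+1) (D+1) <= Q * expn D D)%N.
Proof.
move=> D1 H.
have Dpos : Rlt 0 (INR D) by apply: lt_0_INR; apply/ltP.
have e0 : Rlt 0 (exp 1) by apply: exp_pos.
have H1 : Rlt (Rmult (INR (D+1)) (exp 1)) (INR Q).
  rewrite plus_INR /=.
  have H' : Rlt (INR D + 1) (INR Q * / exp 1) by lra.
  have := Rmult_lt_compat_r (exp 1) _ _ e0 H'.
  by rewrite Rmult_assoc Rinv_l ?Rmult_1_r //; apply: Rgt_not_eq.
have H2 : Rle (pow (INR (D+1)) D) (Rmult (exp 1) (pow (INR D) D)).
  have E1 : INR (D+1) = Rmult (1 + / INR D) (INR D).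
    rewrite plus_INR /=; field; apply: Rgt_not_eq; exact: Dpos.
  rewrite E1 Rpow_mult_distr; apply: Rmult_le_compat_r.
    apply: pow_le; lra.
  have E2 : exp 1 = pow (exp (/ INR D)) D.
    rewrite exp_pow_n; f_equal; field; apply: Rgt_not_eq; exact: Dpos.
  rewrite E2; apply: pow_incr; split.
    have : Rlt 0 (/ INR D) by apply: Rinv_0_lt_compat.
    lra.
  exact: exp_ineq1_le.
have H3 : Rlt (INR (expn (D+1) (D+1))) (INR (Q * expn D D)).
  rewrite mult_INR !INR_expn.
  have -> : pow (INR (D + 1)) (D + 1) = Rmult (INR (D+1)) (pow (INR (D + 1)) D).
    by rewrite addn1 /=.
  have PD : Rlt 0 (pow (INR D) D) by apply: pow_lt.
  have P1 : Rlt 0 (INR (D+1)) by apply: lt_0_INR; apply/ltP; rewrite addn1.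
  apply: (Rle_lt_trans _ (Rmult (INR (D+1)) (Rmult (exp 1) (pow (INR D) D)))).
    by apply: Rmult_le_compat_l; [lra|].
  rewrite -Rmult_assoc; apply: Rmult_lt_compat_r => //.
have := INR_lt _ _ H3.
by move/ltP => /ltnW.
Qed.


Section LLL.
Variables (V : finType) (q : nat).
Notation col := {ffun V -> 'I_q}.

Definition mono (e : {set V}) (f : col) : bool := [forall x in e, forall y in e, f x == f y].
Definition good (S : {set {set V}}) (f : col) : bool := [forall s in S, ~~ mono s f].
Definition NN S := #|[set f : col | good S f]|.
Definition MM e S := #|[set f : col | good S f && mono e f]|.
Definition sim (e : {set V}) (f g : col) : bool := [forall x in ~: e, f x == g x].

Definition ext (e : {set V}) (f : col) (c : 'I_q) : col := [ffun x => if x \in e then c else f x].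

Lemma card_mono_sim e f : e != set0 -> #|[set g | mono e g && sim e f g]| = q.
Proof.
move=> /set0Pn [x0 x0e].
have -> : [set g | mono e g && sim e f g] = ext e f @: [set: 'I_q].
  apply/setP => g; rewrite !inE; apply/andP/imsetP.
  - move=> [/forallP mg /forallP sg]; exists (g x0); first by rewrite inE.
    apply/ffunP => x; rewrite ffunE; case: ifP => xe.
      by have /implyP/(_ xe)/forallP/(_ x0)/implyP/(_ x0e)/eqP := mg x.
    by have /implyP := sg x; rewrite inE xe => /(_ isT) /eqP.
  - move=> [c _ ->]; split.
      by apply/forallP=> x; apply/implyP=> xe; apply/forallP=> y; apply/implyP=> ye; rewrite !ffunE xe ye.
    by apply/forallP=> x; apply/implyP; rewrite inE !ffunE => /negbTE ->.
rewrite card_imset ?cardsT ?card_ord //.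
by move=> c d /ffunP /(_ x0); rewrite !ffunE x0e.
Qed.

Lemma card_sim e g : #|[set f | sim e f g]| = q ^ #|e|.
Proof.
pose F := fun x => if x \in e then (predT : pred 'I_q) else pred1 (g x).
have -> : [set f | sim e f g] = [set f | f \in family F].
  apply/setP => f; rewrite !inE; apply/forallP/familyP => H x; have := H x; rewrite /F inE;
  by case: (x \in e) => //=.
rewrite cardsE card_family.
have H : forall s : seq V, foldr muln 1 [seq #|F x| | x <- s] = \prod_(x <- s) #|F x|.
  by elim=> [|x s IH]; rewrite ?big_nil ?big_cons //= IH.
rewrite /image_mem H big_enum /=.
rewrite (bigID (fun x => x \in e)) /= [X in _ * X]big1 ?muln1; last first.
  by move=> x /negbTE xe; rewrite /F xe card1.
rewrite (eq_bigr (fun _ => q)); last by move=> x xe; rewrite /F xe; apply: card_ord.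
by rewrite prod_nat_const.
Qed.

Lemma mono_sim (e s : {set V}) (f g : col) : [disjoint s & e] -> sim e f g -> mono s f = mono s g.
Proof.
move=> dse /forallP sg.
have E : forall x, x \in s -> f x = g x.
  move=> x xs; have /implyP := sg x; rewrite inE.
  by rewrite (disjointFr dse xs) => /(_ isT) /eqP.
apply/forallP/forallP => H x; apply/implyP => xs; apply/forallP => y; apply/implyP => ys;
  have /implyP/(_ xs)/forallP/(_ y)/implyP/(_ ys) := H x; by rewrite !E.
Qed.

Lemma good_sim (e : {set V}) (S : {set {set V}}) (f g : col) : {in S, forall s : {set V}, [disjoint s & e]} -> sim e f g -> good S f = good S g.
Proof.
move=> dS sfg; apply: eq_forallb_in => s sS; by rewrite (mono_sim (dS s sS) sfg).
Qed.

Lemma sumb (c : pred col) : \sum_g (c g : nat) = #|[set g | c g]|.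
Proof. rewrite -sum1dep_card [RHS]big_mkcond /=; apply: eq_bigr => g _; by case: (c g). Qed.

Lemma sumbq (c : pred col) k : \sum_g (c g * k) = #|[set g | c g]| * k.
Proof. by rewrite -sumb big_distrl. Qed.

Lemma indep (e : {set V}) (S : {set {set V}}) : e != set0 -> {in S, forall s : {set V}, [disjoint s & e]} ->
  q ^ #|e| * MM e S = q * NN S.
Proof.
move=> e0 dS.
pose T := \sum_(f : col) \sum_(g : col) ((good S f && (mono e g && sim e f g)) : nat).
have T1 : T = NN S * q.
  rewrite /T /NN -sumbq; apply: eq_bigr => f _.
  case: (good S f) => //=; first by rewrite sumb card_mono_sim // mul1n.
  by rewrite big1.
have T2 : T = MM e S * q ^ #|e|.
  rewrite /T exchange_big /MM -sumbq; apply: eq_bigr => g _.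
  rewrite (eq_bigr (fun f => ((good S g && mono e g) && sim e f g : nat))); last first.
    move=> f _; case sfg: (sim e f g); last by rewrite !andbF.
    by rewrite (good_sim dS sfg) andbA.
  case: (good S g && mono e g) => /=; first by rewrite sumb card_sim mul1n.
  by rewrite big1.
by rewrite mulnC -T2 T1 mulnC.
Qed.

Lemma good_U (e : {set V}) (S : {set {set V}}) f : good (e |: S) f = ~~ mono e f && good S f.
Proof.
apply/forallP/andP => [H|[H1 /forallP H2] s].
  split; first by have /implyP := H e; apply; rewrite setU11.
  by apply/forallP=> s; apply/implyP=> sS; have /implyP := H s; apply; rewrite setU1r.
apply/implyP; rewrite in_setU1 => /orP [/eqP -> //|sS].
by have /implyP := H2 s; apply.
Qed.

Lemma NN_split (e : {set V}) (S : {set {set V}}) : NN S = NN (e |: S) + MM e S.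
Proof.
rewrite /NN /MM -(cardsID [set f : col | mono e f] [set f | good S f]) addnC.
congr (_ + _); apply: eq_card => f; rewrite !inE ?good_U //.
Qed.

Lemma good_sub (S T : {set {set V}}) f : S \subset T -> good T f -> good S f.
Proof.
move=> /subsetP ST /forallP H; apply/forallP => s; apply/implyP => sS.
by have /implyP := H s; apply; apply: ST.
Qed.

Lemma MM_mono e (S T : {set {set V}}) : S \subset T -> MM e T <= MM e S.
Proof.
move=> ST; apply: subset_leq_card; apply/subsetP => f; rewrite !inE => /andP [g m].
by rewrite m (good_sub ST g).
Qed.

Lemma NN0 : NN set0 = q ^ #|V|.
Proof.
rewrite /NN -[in RHS](card_ord q) -card_ffun; apply: eq_card => f; rewrite !inE.
by apply/forallP => s; rewrite inE.
Qed.

Lemma chain (D : nat) (A T : {set {set V}}) : [disjoint A & T] ->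
  (forall (S : {set {set V}}) (t : {set V}), t \in T -> S \subset (A :|: T) :\ t -> (D+1) * MM t S <= NN S) ->
  D ^ #|T| * NN A <= (D+1) ^ #|T| * NN (A :|: T).
Proof.
have [k Tk] : exists k, #|T| = k by eexists.
elim: k T Tk => [|k IH] T Tk dAT H.
  by move/eqP: (Tk); rewrite cards_eq0 => /eqP ->; rewrite setU0 cards0 !expn0.
have /set0Pn [t tT] : T != set0 by rewrite -card_gt0 Tk.
set T' := T :\ t.
have T'k : #|T'| = k by move: Tk; rewrite (cardsD1 t T) tT add1n => -[].
have dAT' : [disjoint A & T'].
  by apply: disjointWr dAT; apply: subsetDl.
have tA : t \notin A by rewrite (disjointFl dAT tT).
have IH' := IH T' T'k dAT'.
have H1 : D ^ k * NN A <= (D + 1) ^ k * NN (A :|: T').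
  rewrite -T'k; apply: IH' => S t' t'T' sub; apply: H.
    by move: t'T'; rewrite inE => /andP [].
  apply: subset_trans sub _; apply: setSD; apply: setUS; apply: subsetDl.
have H2 : (D+1) * MM t (A :|: T') <= NN (A :|: T').
  apply: H => //; apply/subsetP => x; rewrite !inE.
  case/orP => [xA|/andP [xt xT]]; last by rewrite xt xT orbT.
  by rewrite xA andbT; apply: contraNneq tA => <-.
have H3 := NN_split t (A :|: T').
have -> : A :|: T = t |: (A :|: T').
  by rewrite setUCA /T' setD1K.
have H4 : D * NN (A :|: T') <= (D+1) * NN (t |: (A :|: T')).
  move: H2 H3; set X := NN (A :|: T'); set Y := NN _; set M := MM _ _ => H2 H3.
  have HM : D * M <= Y.
    by move: H2; rewrite H3 mulnDl mul1n leq_add2r.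
  by rewrite H3 mulnDr mulnDl mul1n leq_add2l.
rewrite Tk !expnS -!mulnA.
apply: leq_trans (leq_mul (leqnn D) H1) _.
rewrite mulnCA [X in _ <= X]mulnCA.
by rewrite leq_mul2l H4 orbT.
Qed.

Lemma expmono D a : D ^ a <= (D+1) ^ a.
Proof. by case: a => [|a] //; rewrite leq_exp2r // addn1. Qed.

Lemma claim (E : {set {set V}}) (r D : nat) :
  0 < q -> 0 < r -> (forall e, e \in E -> #|e| = r) ->
  (forall e, e \in E -> nb_intersecting E e <= D) ->
  (D+1)^(D+1) <= q^(r-1) * D^D ->
  forall n (S : {set {set V}}) (e : {set V}), #|S| < n -> S \subset E -> e \in E ->
    e \notin S -> (D+1) * MM e S <= NN S.
Proof.
move=> q0 r0 unif nbD key n; elim: n => // n IH S e Sn SE eE eS.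
set N1 := [set e' in E | (e' != e) && ~~ [disjoint e' & e]].
have N1D : #|N1| <= D by apply: nbD.
set S1 := S :&: N1.
set S2 := S :\: N1.
have e0 : e != set0 by rewrite -card_gt0 unif.
have dS2 : {in S2, forall s : {set V}, [disjoint s & e]}.
  move=> s; rewrite !inE => /andP [sN1 sS].
  have sE : s \in E by apply: (subsetP SE).
  have sne : s != e by apply: contraNneq eS => <-.
  by move: sN1; rewrite sE sne /= negbK.
have Hind := indep e0 dS2.
have HQ : q ^ (r-1) * MM e S2 = NN S2.
  move: Hind; rewrite unif //.
  have -> : q ^ r = q * q ^ (r-1) by rewrite -expnS; congr (_ ^ _); lia.
  by rewrite -mulnA => /eqP; rewrite eqn_pmul2l // => /eqP.
have HM : MM e S <= MM e S2 by apply: MM_mono; apply: subsetDl.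
have US : S2 :|: S1 = S by rewrite setUC setID.
have Hch : D ^ #|S1| * NN S2 <= (D+1) ^ #|S1| * NN (S2 :|: S1).
  apply: chain.
    rewrite disjoints_subset; apply/subsetP => s; rewrite !inE => /andP [h _].
    by apply/negP => /andP [_ h']; rewrite h' in h.
  move=> S' t tS1 sub; apply: IH => //.
  - rewrite US in sub.
    have tS : t \in S by move: tS1; rewrite inE => /andP [].
    apply: leq_ltn_trans (subset_leq_card sub) _.
    by move: Sn; rewrite (cardsD1 t S) tS add1n ltnS.
  - rewrite US in sub; apply: subset_trans sub _.
    by apply: subset_trans (subsetDl S [set t]) SE.
  - by move: tS1; rewrite !inE => /andP [_ /andP []].
  - apply/negP => tS'; have := subsetP sub t tS'.
    by rewrite !inE eqxx.
rewrite US in Hch.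
have S1D : #|S1| <= D by apply: leq_trans (subset_leq_card (subsetIr S N1)) N1D.
have Hch' : D ^ D * NN S2 <= (D+1) ^ D * NN S.
  have -> : D ^ D = D ^ (D - #|S1|) * D ^ #|S1| by rewrite -expnD subnK.
  have -> : (D+1) ^ D = (D+1) ^ (D - #|S1|) * (D+1) ^ #|S1| by rewrite -expnD subnK.
  rewrite -!mulnA; apply: leq_mul; first exact: expmono.
  exact: Hch.
have pos : 0 < q ^ (r-1) * (D+1) ^ D by rewrite muln_gt0 !expn_gt0 q0 addn1.
rewrite -(leq_pmul2l pos).
apply: (@leq_trans ((D+1)^(D+1) * NN S2)).
  have -> : (D+1)^(D+1) = (D+1) * (D+1)^D by rewrite addn1 expnS.
  rewrite -HQ.
  have -> : q ^ (r - 1) * (D + 1) ^ D * ((D + 1) * MM e S) =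
            (D + 1) * (D + 1) ^ D * (q ^ (r - 1) * MM e S).
    by rewrite mulnACA [RHS]mulnACA (mulnC (D+1) (q^(r-1))).
  by rewrite leq_mul2l leq_mul2l HM !orbT.
apply: (@leq_trans (q^(r-1) * D^D * NN S2)).
  by apply: leq_mul.
by rewrite -!mulnA leq_mul2l Hch' orbT.
Qed.

Lemma MM_bound (e : {set V}) (S : {set {set V}}) r :
  0 < q -> #|e| = r -> 0 < r -> q ^ (r-1) * MM e S <= q ^ #|V|.
Proof.
move=> q0 er r0.
have e0 : e != set0 by rewrite -card_gt0 er.
have Hind := @indep e set0 e0 (fun s (h : s \in set0) => ltac:(by rewrite inE in h)).
rewrite -NN0.
have HQ : q ^ (r-1) * MM e set0 = NN set0.
  move: Hind; rewrite er.
  have -> : q ^ r = q * q ^ (r-1) by rewrite -expnS; congr (_ ^ _); lia.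
  by rewrite -mulnA => /eqP; rewrite eqn_pmul2l // => /eqP.
rewrite -HQ leq_mul2l MM_mono ?orbT //; exact: sub0set.
Qed.

Lemma union (E : {set {set V}}) r : 0 < q -> 0 < r -> (forall e, e \in E -> #|e| = r) ->
  forall T : {set {set V}}, T \subset E -> q ^ (r-1) * q ^ #|V| <= #|T| * q ^ #|V| + q ^ (r-1) * NN T.
Proof.
move=> q0 r0 unif T; have [k Tk] : exists k, #|T| = k by eexists.
elim: k T Tk => [|k IH] T Tk TE.
  by move/eqP: (Tk); rewrite cards_eq0 => /eqP ->; rewrite NN0 cards0.
have /set0Pn [t tT] : T != set0 by rewrite -card_gt0 Tk.
set T' := T :\ t.
have T'k : #|T'| = k by move: Tk; rewrite (cardsD1 t T) tT add1n => -[].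
have T'E : T' \subset E by apply: subset_trans (subsetDl _ _) TE.
have := IH T' T'k T'E.
have H3 := NN_split t T'.
have HB := @MM_bound t T' r q0 (unif t (subsetP TE t tT)) r0.
rewrite Tk T'k.
have -> : NN T = NN (t |: T') by rewrite /T' setD1K. move: HB; set Y := NN (t |: T'); set M := MM t T'; set Z := q ^ #|V|.
rewrite H3 mulnDr mulSn -/Y -/M; lia.
Qed.

Lemma NN_pos (E : {set {set V}}) (r D : nat) :
  0 < q -> 0 < r -> 0 < D -> (forall e, e \in E -> #|e| = r) ->
  (forall e, e \in E -> nb_intersecting E e <= D) ->
  (D+1)^(D+1) <= q^(r-1) * D^D -> 0 < NN E.
Proof.
move=> q0 r0 D0 unif nbD key.
have Hc : forall (S : {set {set V}}) (t : {set V}), t \in E -> S \subset (set0 :|: E) :\ t ->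
   (D+1) * MM t S <= NN S.
  move=> S t tE sub.
  apply: (@claim E r D q0 r0 unif nbD key #|S|.+1) => //.
  - apply: subset_trans sub _; rewrite set0U; exact: subsetDl.
  - apply/negP => tS; have := subsetP sub t tS; by rewrite !inE eqxx.
have := @chain D set0 E (ltac:(by rewrite disjoints_subset sub0set)) Hc.
rewrite set0U NN0 => H.
have H' : 0 < D ^ #|E| * q ^ #|V| by rewrite muln_gt0 !expn_gt0 D0 q0.
have := leq_trans H' H.
by rewrite muln_gt0 => /andP [].
Qed.
Lemma dummy : True. Proof.
by [].
Qed.
End LLL.

Lemma colorable_of_good (V : finType) (E : {set {set V}}) (r : nat) :
  3 <= r -> uniform r E ->
  (exists f : {ffun V -> 'I_(r-1)}, good E f) -> colorable E.
Proof.
move=> r3 unif [f fg].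
exists (fun v => val (f v)) => e eE; apply/andP; split.
- have /forallP/(_ e)/implyP/(_ eE) nm := fg.
  case/forall_inPn: nm => x xe /forall_inPn [y ye fxy].
  have u : uniq [:: val (f x); val (f y)].
    by rewrite /= inE andbT; apply: contra fxy => /eqP /val_inj ->.
  have sub : {subset [:: val (f x); val (f y)] <= color_set (fun v => val (f v)) e}.
    move=> z; rewrite !inE => /orP [] /eqP ->; rewrite /color_set mem_undup;
    apply: (image_f (fun v => val (f v))); by [].
  by have := uniq_leq_size u sub.
- rewrite unif //.
  have sub : {subset color_set (fun v => val (f v)) e <= iota 0 (r-1)}.
    move=> z; rewrite /color_set mem_undup => /imageP [v _ ->].
    by rewrite mem_iota add0n ltn_ord.
  have := uniq_leq_size (undup_uniq _) sub; rewrite size_iota => h.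
  apply: leq_ltn_trans h _; lia.
Qed.

Theorem theorem1p1 (V : finType) (E : {set {set V}}) (r : nat) :
  3 <= r ->
  bi_hypergraph E ->
  uniform r E ->
  ( #|E| < (r - 1) ^ (r - 1)
    \/ (forall e, e \in E ->
          Rlt (INR (nb_intersecting E e))
              (Rminus (Rmult (INR ((r - 1) ^ (r - 1))) (Rinv (exp 1))) 1))) ->
  colorable E.
Proof.
move=> r3 _ unif H.
apply: (colorable_of_good r3 unif).
have q0 : 0 < r - 1 by lia.
have r0 : 0 < r by lia.
suff : 0 < NN (r-1) E.
  by rewrite /NN card_gt0 => /set0Pn [f]; rewrite inE => fg; exists f.
case: H => [Hi | Hii].
  have := union q0 r0 unif (subxx E).
  have Z0 : 0 < (r-1) ^ #|V| by rewrite expn_gt0 q0.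
  rewrite lt0n; apply: contraTneq => ->; rewrite muln0 addn0 -ltnNge.
  by rewrite ltn_mul2r Z0 Hi.
case: (set_0Vmem E) => [E0 | [e1 e1E]].
  rewrite /NN card_gt0; apply/set0Pn.
  exists [ffun _ => Ordinal q0]; rewrite inE E0; apply/forallP => s; by rewrite inE.
set m := \max_(e in E) nb_intersecting E e.
have nbm : forall e, e \in E -> nb_intersecting E e <= maxn m 1.
  move=> e eE; apply: leq_trans (leq_maxl _ 1).
  by apply: leq_bigmax_cond.
apply: (@NN_pos V (r-1) E r (maxn m 1) q0 r0 _ unif nbm).
  by rewrite leq_max orbT.
case: (posnP m) => [m0 | mpos].
  rewrite m0 /= (_ : maxn 0 1 = 1) // muln1.
  apply: (@leq_trans (2 ^ (r-1))).
    by rewrite (leq_exp2l 2 _ (isT : 1 < 2)); lia.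
  by rewrite leq_exp2r; lia.
have [e0 e0E me0] := @eq_bigmax_cond _ (mem E) (fun e => nb_intersecting E e)
                       (ltac:(by rewrite card_gt0; apply/set0Pn; exists e1)).
have -> : maxn m 1 = m by apply/maxn_idPl.
rewrite /m me0.
apply: key_real; first by rewrite -me0.
exact: Hii.
Qed.
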